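(* Let $\gamma>0$, let $V\in C_{p,\gamma}^{0}(\mathbb{R})$ be real-valued, and $\lambda\in\mathbb{R}$. Suppose $\psi(x)=e^{\mathrm{i}kx}p(x)$, with $k\in\mathbb{C}$ and $p\in C^2_{p,\gamma}(\mathbb{R})$, is a bounded Bloch solution of $-\psi''+V\psi=\lambda\psi$ that has a zero. Then the quasimomentum is $k=\frac{n\pi}{\gamma}$ for some $n\in\mathbb{Z}$, and $\psi$ equals the product of a complex constant and a real-valued function $f$ that is $\gamma$-periodic or $\gamma$-anti-periodic ($f(x+\gamma)=f(x)$ for all $x$, or $f(x+\gamma)=-f(x)$ for all $x$).
   Context: $C_{p}^{0}(I)$: integrable piecewise-continuous functions on $I$ (finitely many discontinuities on each finite subinterval, one-sided improper integrals of $|f|$ converging at each discontinuity); $C_{p}^{l}(I)$: differentiable functions with derivative in $C_{p}^{l-1}(I)$; $C_{p,\gamma}^{l}(\mathbb{R})$: $\gamma$-periodic functions in $C_{p}^{l}(\mathbb{R})$. A Bloch solution is a solution of the form $e^{\mathrm{i}kx}p(x)$ with $p$ $\gamma$-periodic; $k$ is its quasimomentum. *)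

(* Defs.v *)
From Stdlib Require Import Reals List.
From Coquelicot Require Import Coquelicot.
Open Scope R_scope.

Definition cexp (z : C) : C :=
  (exp (Re z) * cos (Im z), exp (Re z) * sin (Im z)).

Definition periodic {T : Type} (gamma : R) (f : R -> T) : Prop :=
  forall x, f (x + gamma) = f x.

(* C_p^0(R) for complex-valued functions: finitely many discontinuities on
   each finite interval; at every discontinuity d the one-sided improper
   integrals of |f| converge. *)
Definition PC0 (f : R -> C) : Prop :=
  (forall a b : R, exists D : list R,
      forall x, a <= x <= b -> ~ In x D -> continuous f x) /\
  (forall d : R, ~ continuous f d ->
     exists delta : R, 0 < delta /\
       (forall t, d < t <= d + delta -> continuous f t) /\
       (forall t, d - delta <= t < d -> continuous f t) /\
       (exists l1 : R, filterlim (fun t => RInt (fun s => Cmod (f s)) t (d + delta))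
                          (at_right d) (locally l1)) /\
       (exists l2 : R, filterlim (fun t => RInt (fun s => Cmod (f s)) (d - delta) t)
                          (at_left d) (locally l2))).

(* C_p^l(R): (continuous) functions differentiable except at finitely many
   points of each finite interval, with derivative in C_p^{l-1}(R). *)
Fixpoint PC (l : nat) (f : R -> C) : Prop :=
  match l with
  | O => PC0 f
  | S l' =>
      (forall x, continuous f x) /\
      exists g : R -> C, PC l' g /\
        forall a b : R, exists D : list R,
          forall x, a <= x <= b -> ~ In x D -> is_derive f x (g x)
  end.

Definition PCper (l : nat) (gamma : R) (f : R -> C) : Prop :=
  PC l f /\ periodic gamma f.

(* psi solves -psi'' + V psi = lambda psi: psi is differentiable and psi'
   is differentiable with the equation holding, except at finitely many
   points of each finite interval (where V may be discontinuous). *)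
Definition is_solution (V : R -> R) (lambda : R) (psi : R -> C) : Prop :=
  exists psi1 : R -> C,
    (forall x, is_derive psi x (psi1 x)) /\
    forall a b : R, exists D : list R,
      forall x, a <= x <= b -> ~ In x D ->
        exists psi2 : C, is_derive psi1 x psi2 /\
          (- psi2 + RtoC (V x) * psi x = RtoC lambda * psi x)%C.

(* Main.v *)
Require Import Defs.
From Stdlib Require Import Reals ZArith Lra List Classical FunctionalExtensionality.
From Coquelicot Require Import Coquelicot.
Open Scope R_scope.

Lemma cmp_base (f g : R -> R) a c :
  a <= c ->
  (forall x, a <= x <= c -> continuous f x /\ continuous g x) ->
  (forall x, a < x < c -> exists df dg, is_derive f x df /\ is_derive g x dg /\ Rabs df <= dg) ->
  Rabs (f c - f a) <= g c - g a.
Proof.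
  intros Hac Hc Hd.
  assert (Hm : forall s : R, (s = 1 \/ s = -1) ->
     s * (f c - f a) <= g c - g a).
  { intros s Hs.
    set (h := fun t => s * f t - g t).
    set (D := fun x => if Rlt_dec a x then if Rlt_dec x c then s * Derive f x - Derive g x else 0 else 0).
    assert (HD: forall x, a < x < c -> is_derive h x (D x)).
    { intros x Hx. destruct (Hd x Hx) as [df [dg [H1 [H2 H3]]]].
      unfold D. destruct (Rlt_dec a x); [|lra]. destruct (Rlt_dec x c); [|lra].
      rewrite (is_derive_unique _ _ _ H1), (is_derive_unique _ _ _ H2).
      unfold h. apply (is_derive_minus (fun t => s * f t) g x). apply is_derive_scal. exact H1. exact H2. }
    assert (Dle : forall x, D x <= 0).
    { intros x. unfold D. destruct (Rlt_dec a x); [|lra]. destruct (Rlt_dec x c); [|lra].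
      destruct (Hd x (conj r r0)) as [df [dg [H1 [H2 H3]]]].
      rewrite (is_derive_unique _ _ _ H1), (is_derive_unique _ _ _ H2).
      destruct Hs; subst s; unfold Rabs in H3; destruct (Rcase_abs df); lra. }
    destruct (MVT_gen h a c D) as [t [Ht Heq]].
    { intros x Hx. rewrite Rmin_left in Hx by lra. rewrite Rmax_right in Hx by lra. now apply HD. }
    { intros x Hx. rewrite Rmin_left in Hx by lra. rewrite Rmax_right in Hx by lra.
      apply continuity_pt_filterlim. destruct (Hc x Hx) as [H1 H2].
      unfold h. apply (continuous_minus (fun t => s * f t) g x). apply (continuous_scal_r s f x). exact H1. exact H2. }
    unfold h in Heq. specialize (Dle t).
    assert (D t * (c - a) <= 0). { apply Rmult_le_0_r; lra. }
    lra. }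
  unfold Rabs. destruct (Rcase_abs (f c - f a)).
  - specialize (Hm (-1) (or_intror eq_refl)). lra.
  - specialize (Hm 1 (or_introl eq_refl)). lra.
Qed.

Lemma cmp_fin (f g : R -> R) (D : list R) : forall a c,
  a <= c ->
  (forall x, a <= x <= c -> continuous f x /\ continuous g x) ->
  (forall x, a < x < c -> ~ In x D -> exists df dg, is_derive f x df /\ is_derive g x dg /\ Rabs df <= dg) ->
  Rabs (f c - f a) <= g c - g a.
Proof.
  induction D as [|d D IH]; intros a c Hac Hc Hd.
  - apply cmp_base; [exact Hac|exact Hc|]. intros x Hx. apply Hd; auto.
  - destruct (Rlt_dec a d) as [H1|H1]; [destruct (Rlt_dec d c) as [H2|H2]|].
    + assert (A1 : Rabs (f d - f a) <= g d - g a).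
      { apply IH; try lra. intros x Hx; apply Hc; lra.
        intros x Hx Hn. apply Hd. lra. intros [E|E]; [lra|contradiction]. }
      assert (A2 : Rabs (f c - f d) <= g c - g d).
      { apply IH; try lra. intros x Hx; apply Hc; lra.
        intros x Hx Hn. apply Hd. lra. intros [E|E]; [lra|contradiction]. }
      replace (f c - f a) with ((f c - f d) + (f d - f a)) by ring.
      eapply Rle_trans. apply Rabs_triang. lra.
    + apply IH; auto. intros x Hx Hn. apply Hd. lra. intros [E|E]; [lra|contradiction].
    + apply IH; auto. intros x Hx Hn. apply Hd. lra. intros [E|E]; [lra|contradiction].
Qed.

Lemma const_fin (Q : R -> R) :
  (forall x, continuous Q x) ->
  (forall a b, exists D, forall x, a <= x <= b -> ~ In x D -> is_derive Q x 0) ->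
  forall s t, Q t = Q s.
Proof.
  intros HQ HD.
  assert (K : forall a c, a <= c -> Q c = Q a).
  { intros a c Hac. destruct (HD a c) as [D HDD].
    assert (Rabs (Q c - Q a) <= (fun _ => 0) c - (fun _ => 0) a).
    { apply (cmp_fin Q (fun _ => 0) D a c Hac).
      - intros x _. split. apply HQ. apply continuous_const.
      - intros x Hx Hn. exists 0, 0. split. apply HDD; auto; lra.
        split. apply (is_derive_const (K:=R_AbsRing) (V:=R_NormedModule) 0 x). rewrite Rabs_R0; lra. }
    simpl in H. pose proof (Rabs_pos (Q c - Q a)).
    assert (Q c - Q a = 0). { destruct (Req_dec (Q c - Q a) 0); auto. pose proof (Rabs_pos_lt _ H1). lra. }
    lra. }
  intros s t. destruct (Rle_dec s t). apply K; auto. symmetry; apply K; lra.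
Qed.

Lemma ex_RInt_all (G : R -> R) : (forall x, continuous G x) -> forall a b, ex_RInt G a b.
Proof. intros HG a b. apply (ex_RInt_continuous (V:=R_CompleteNormedModule)). intros; apply HG. Qed.

Lemma is_derive_RInt_all (G : R -> R) x0 t : (forall x, continuous G x) ->
  is_derive (fun u => RInt G x0 u) t (G t).
Proof.
  intros HG. apply (is_derive_RInt G (fun u => RInt G x0 u) x0 t).
  apply filter_forall. intro u. apply (RInt_correct (V:=R_CompleteNormedModule)), ex_RInt_all, HG. apply HG.
Qed.

Lemma deriv_everywhere (P G : R -> R) :
  (forall x, continuous P x) -> (forall x, continuous G x) ->
  (forall a b, exists D, forall x, a <= x <= b -> ~ In x D -> is_derive P x (G x)) ->
  forall x, is_derive P x (G x).
Proof.
  intros HP HG HD x0.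
  set (Q := fun t => P t - RInt G x0 t).
  assert (HQ : forall s t, Q t = Q s).
  { apply const_fin.
    - intro x. unfold Q. apply (continuous_minus P (fun u => RInt G x0 u)). apply HP.
      apply ex_derive_continuous. eexists. apply is_derive_RInt_all, HG.
    - intros a b. destruct (HD a b) as [D HDD]. exists D. intros x Hx Hn.
      replace 0 with (G x - G x) by ring. unfold Q.
      apply (is_derive_minus P (fun u => RInt G x0 u)). apply HDD; auto. apply is_derive_RInt_all, HG. }
  apply is_derive_ext with (f := fun t => Q x0 + RInt G x0 t).
  { intro t. rewrite <- (HQ x0 t). unfold Q. simpl. ring. }
  replace (G x0) with (0 + G x0) by ring.
  apply (is_derive_plus (fun _ => Q x0) (fun t => RInt G x0 t)).
  apply (is_derive_const (K:=R_AbsRing) (V:=R_NormedModule)). apply is_derive_RInt_all, HG.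
Qed.

Lemma is_derive_lin (A B x : R) : is_derive (fun r => A * r + B) x A.
Proof. auto_derive; [auto | ring]. Qed.

Lemma cont_of_deriv (b b1 : R -> R) x : is_derive b x (b1 x) -> continuous b x.
Proof. intro H. apply (ex_derive_continuous (K:=R_AbsRing) (V:=R_NormedModule)). eexists; exact H. Qed.

Lemma local_core (b b1 : R -> R) z eps C :
  0 < eps -> 0 <= C -> eps * C <= 1/2 ->
  (forall x, is_derive b x (b1 x)) ->
  b z = 0 ->
  (forall m, (forall r, z <= r <= z + eps -> Rabs (b r) <= m) ->
      forall s, z <= s <= z + eps -> Rabs (b1 s) <= C * m) ->
  forall s, z <= s <= z + eps -> b s = 0 /\ b1 s = 0.
Proof.
  intros He HC HeC Hb Hz Hbound.
  destruct (continuity_ab_maj (fun r => Rabs (b r)) z (z + eps)) as [Mx [HMx HMxI]].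
  { lra. }
  { intros c Hc. apply continuity_pt_filterlim.
    apply continuous_Rabs_comp. apply (cont_of_deriv b b1), Hb. }
  set (m := Rabs (b Mx)).
  assert (Hm : forall r, z <= r <= z + eps -> Rabs (b r) <= m) by (intros; apply HMx; auto).
  assert (Hb1 := Hbound m Hm).
  assert (Hs : forall s, z <= s <= z + eps -> Rabs (b s) <= C * m * eps).
  { intros s Hs.
    assert (Rabs (b s - b z) <= (fun r => C * m * r + 0) s - (fun r => C * m * r + 0) z).
    { apply (cmp_fin b (fun r => C * m * r + 0) nil z s). lra.
      - intros x Hx. split. apply (cont_of_deriv b b1), Hb.
        apply (cont_of_deriv _ (fun _ => C * m)), is_derive_lin.
      - intros x Hx _. exists (b1 x), (C * m). split. apply Hb. split. apply is_derive_lin.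
        apply Hb1. lra. }
    rewrite Hz, Rminus_0_r in H. simpl in H.
    assert (0 <= m) by (unfold m; apply Rabs_pos).
    assert (C * m * (s - z) <= C * m * eps).
    { apply Rmult_le_compat_l. apply Rmult_le_pos; lra. lra. }
    lra. }
  assert (0 <= m) by (unfold m; apply Rabs_pos).
  assert (m <= C * m * eps) by (apply Hs; auto).
  assert (m = 0).
  { assert (C * m * eps = (eps * C) * m) by ring.
    assert ((eps * C) * m <= 1/2 * m) by (apply Rmult_le_compat_r; lra). lra. }
  intros s Hs'. split.
  - specialize (Hs s Hs'). rewrite H1 in Hs. rewrite Rmult_0_r, Rmult_0_l in Hs.
    destruct (Req_dec (b s) 0); auto. pose proof (Rabs_pos_lt _ H2). lra.
  - specialize (Hb1 s Hs'). rewrite H1, Rmult_0_r in Hb1.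
    destruct (Req_dec (b1 s) 0); auto. pose proof (Rabs_pos_lt _ H2). lra.
Qed.

Definition bound_prop (b b1 : R -> R) z eps C :=
  forall m, (forall r, z <= r <= z + eps -> Rabs (b r) <= m) ->
      forall s, z <= s <= z + eps -> Rabs (b1 s) <= C * m.

Lemma ball_R (z d x : R) : Rabs (x - z) < d -> ball z d x.
Proof. intro H. exact H. Qed.

Lemma deriv_bound (V b : R -> R) lam K m x :
  Rabs (V x) + Rabs lam <= K -> Rabs (b x) <= m ->
  Rabs ((V x - lam) * b x) <= K * m.
Proof.
  intros H1 H2. rewrite Rabs_mult.
  apply Rmult_le_compat; try apply Rabs_pos; auto.
  unfold Rminus. eapply Rle_trans. apply Rabs_triang. rewrite Rabs_Ropp. lra.
Qed.

Lemma caseA (V b b1 : R -> R) lam z :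
  continuous V z ->
  (forall x, continuous b1 x) ->
  (forall a c, exists D, forall x, a <= x <= c -> ~ In x D -> is_derive b1 x ((V x - lam) * b x)) ->
  b1 z = 0 ->
  exists eps C, 0 < eps /\ 0 <= C /\ eps * C <= 1/2 /\ bound_prop b b1 z eps C.
Proof.
  intros HV Hb1c Hb1 Hz.
  apply continuity_pt_filterlim in HV. pose proof (proj1 (continuity_pt_locally V z) HV) as HV2. clear HV. rename HV2 into HV.
  destruct (HV (mkposreal 1 Rlt_0_1)) as [d Hd]. simpl in Hd.
  set (K := Rabs (V z) + 1 + Rabs lam).
  assert (HK : 0 <= K) by (unfold K; pose proof (Rabs_pos (V z)); pose proof (Rabs_pos lam); lra).
  set (eps := Rmin (d/2) (1/(2*(K+1)))).
  assert (Hd0 := cond_pos d).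
  assert (He1 : eps <= d/2) by apply Rmin_l.
  assert (He2 : eps <= 1/(2*(K+1))) by apply Rmin_r.
  assert (He0 : 0 < eps).
  { unfold eps. apply Rmin_case. lra. apply Rdiv_lt_0_compat; lra. }
  exists eps, K. split; [auto|split;[auto|split]].
  { assert (eps * (2 * (K+1)) <= 1).
    { apply (Rmult_le_compat_r (2*(K+1))) in He2; [|lra].
      replace (1 / (2 * (K + 1)) * (2 * (K + 1))) with 1 in He2 by (field; lra). exact He2. }
    nra. }
  intros m Hm s Hs.
  destruct (Hb1 z (z + eps)) as [D HD].
  assert (Hm0 : 0 <= m) by (eapply Rle_trans; [apply Rabs_pos| apply (Hm z); lra]).
  assert (Rabs (b1 s - b1 z) <= (fun r => K * m * r + 0) s - (fun r => K * m * r + 0) z).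
  { apply (cmp_fin b1 (fun r => K * m * r + 0) D z s). lra.
    - intros x Hx. split. apply Hb1c.
      apply (cont_of_deriv _ (fun _ => K * m)), is_derive_lin.
    - intros x Hx Hn. exists ((V x - lam) * b x), (K * m). split. apply HD; auto; lra.
      split. apply is_derive_lin.
      apply deriv_bound. 2: apply Hm; lra.
      assert (Rabs (V x - V z) < 1). { apply Hd. apply ball_R. rewrite Rabs_right; lra. }
      assert (Rabs (V x) <= Rabs (V z) + 1).
      { replace (V x) with (V z + (V x - V z)) by ring.
        eapply Rle_trans. apply Rabs_triang. lra. }
      unfold K. lra. }
  rewrite Hz, Rminus_0_r in H. simpl in H.
  assert (K * m * (s - z) <= K * m * 1).
  { apply Rmult_le_compat_l. apply Rmult_le_pos; lra.
    assert (1/(2*(K+1)) <= 1).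
    { apply (Rmult_le_reg_r (2*(K+1))). lra. unfold Rdiv. rewrite Rmult_assoc, Rinv_l by lra. lra. }
    lra. }
  lra.
Qed.
Lemma ball_R' (z d x : R) : ball z d x -> Rabs (x - z) < d.
Proof. intro H. exact H. Qed.
Lemma exRInt_Va (V : R -> R) z dl :
  (forall t, z < t <= z + dl -> continuous V t) ->
  forall a c, z < a -> a <= c -> c <= z + dl -> ex_RInt (fun u => Rabs (V u)) a c.
Proof.
  intros HV a c H1 H2 H3. apply (ex_RInt_continuous (V:=R_CompleteNormedModule)).
  intros u Hu. rewrite Rmin_left in Hu by lra. rewrite Rmax_right in Hu by lra.
  apply continuous_Rabs_comp. apply HV. lra.
Qed.
Lemma derive_Va (V : R -> R) z dl t x :
  (forall t, z < t <= z + dl -> continuous V t) ->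
  z < t < z + dl -> z < x < z + dl ->
  is_derive (fun r => RInt (fun u => Rabs (V u)) t r) x (Rabs (V x)).
Proof.
  intros HV Ht Hx.
  apply (is_derive_RInt (fun u => Rabs (V u)) (fun r => RInt (fun u => Rabs (V u)) t r) t x).
  - assert (Hr : 0 < Rmin (x - z) (z + dl - x)) by (apply Rmin_glb_lt; lra).
    exists (mkposreal _ Hr). intros r Hb. apply ball_R' in Hb. simpl in Hb.
    assert (Hr1 := Rmin_l (x - z) (z + dl - x)). assert (Hr2 := Rmin_r (x - z) (z + dl - x)).
    apply Rabs_def2 in Hb. destruct Hb as [Hb1 Hb2].
    apply (RInt_correct (V:=R_CompleteNormedModule)).
    destruct (Rle_dec t r).
    + apply (exRInt_Va V z dl HV); lra.
    + apply (ex_RInt_swap (V:=R_CompleteNormedModule)). apply (exRInt_Va V z dl HV); lra.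
  - apply continuous_Rabs_comp. apply HV. lra.
Qed.
Lemma deriv_g (V : R -> R) z dl t m lam x :
  (forall t, z < t <= z + dl -> continuous V t) ->
  z < t < z + dl -> z < x < z + dl ->
  is_derive (fun r => m * RInt (fun u => Rabs (V u)) t r + m * Rabs lam * r) x (m * Rabs (V x) + m * Rabs lam).
Proof.
  intros HV Ht Hx.
  pose proof (derive_Va V z dl t x HV Ht Hx) as H1.
  pose proof (is_derive_scal _ x m _ H1) as H2.
  pose proof (is_derive_lin (m * Rabs lam) 0 x) as H3.
  pose proof (is_derive_plus _ _ x _ _ H2 H3) as H4.
  eapply is_derive_ext; [|exact H4]. intro r. cbv beta. unfold plus; simpl. ring.
Qed.

Lemma caseB (V b b1 : R -> R) lam z dl l1 :
  0 < dl ->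
  (forall t, z < t <= z + dl -> continuous V t) ->
  filterlim (fun t => RInt (fun s => Rabs (V s)) t (z + dl)) (at_right z) (locally l1) ->
  (forall x, continuous b1 x) ->
  (forall a c, exists D, forall x, a <= x <= c -> ~ In x D -> is_derive b1 x ((V x - lam) * b x)) ->
  b1 z = 0 ->
  exists eps C, 0 < eps /\ 0 <= C /\ eps * C <= 1/2 /\ bound_prop b b1 z eps C.
Proof.
  intros Hdl HV Hlim Hb1c Hb1 Hz.
  destruct (proj1 (filterlim_locally _ l1) Hlim (mkposreal 1 Rlt_0_1)) as [eta Heta].
  simpl in Heta.
  assert (HF : forall t, z < t < z + eta -> RInt (fun s => Rabs (V s)) t (z + dl) < l1 + 1).
  { intros t Ht. assert (H := Heta t). apply ball_R' in H.
    apply Rabs_def2 in H. lra. apply ball_R. rewrite Rabs_right; lra. lra. }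
  set (L := Rmax (l1 + 1) 0).
  set (C := L + Rabs lam).
  assert (HC : 0 <= C) by (unfold C, L; pose proof (Rmax_r (l1+1) 0); pose proof (Rabs_pos lam); lra).
  assert (Heta0 := cond_pos eta).
  set (eps := Rmin (Rmin (eta/2) (dl/2)) (Rmin (1/2) (1/(2*(C+1))))).
  assert (He1 : eps <= eta/2) by (unfold eps; eapply Rle_trans; [apply Rmin_l|apply Rmin_l]).
  assert (He2 : eps <= dl/2) by (unfold eps; eapply Rle_trans; [apply Rmin_l|apply Rmin_r]).
  assert (He3 : eps <= 1/2) by (unfold eps; eapply Rle_trans; [apply Rmin_r|apply Rmin_l]).
  assert (He4 : eps <= 1/(2*(C+1))) by (unfold eps; eapply Rle_trans; [apply Rmin_r|apply Rmin_r]).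
  assert (He0 : 0 < eps).
  { unfold eps. repeat apply Rmin_glb_lt; try lra. apply Rdiv_lt_0_compat; lra. }
  exists eps, C. split; [auto|split;[auto|split]].
  { assert (eps * (2 * (C+1)) <= 1).
    { apply (Rmult_le_compat_r (2*(C+1))) in He4; [|lra].
      replace (1 / (2 * (C + 1)) * (2 * (C + 1))) with 1 in He4 by (field; lra). exact He4. }
    assert (eps*C <= eps*(C+1)) by (apply Rmult_le_compat_l; lra). lra. }
  intros m Hm s Hs.
  assert (Hm0 : 0 <= m) by (eapply Rle_trans; [apply Rabs_pos| apply (Hm z); lra]).
  destruct (Req_dec s z) as [E|E].
  { subst s. rewrite Hz, Rabs_R0. apply Rmult_le_pos; lra. }
  assert (Key : forall e, 0 < e -> Rabs (b1 s) <= C * m + e).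
  { intros e He.
    assert (Hc := Hb1c z). apply continuity_pt_filterlim in Hc.
    destruct (proj1 (continuity_pt_locally b1 z) Hc (mkposreal e He)) as [d' Hd'].
    simpl in Hd'. assert (Hd'0 := cond_pos d').
    set (t := z + Rmin (d'/2) ((s - z)/2)).
    assert (Ht1 : z < t) by (unfold t; assert (0 < Rmin (d'/2) ((s-z)/2)) by (apply Rmin_glb_lt; lra); lra).
    assert (Ht2 : t <= z + (s - z)/2) by (unfold t; pose proof (Rmin_r (d'/2) ((s-z)/2)); lra).
    assert (Ht3 : t <= z + d'/2) by (unfold t; pose proof (Rmin_l (d'/2) ((s-z)/2)); lra).
    assert (Hbt : Rabs (b1 t) < e).
    { rewrite <- (Rminus_0_r (b1 t)), <- Hz. apply Hd'. apply ball_R. rewrite Rabs_right; lra. }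
    destruct (Hb1 t s) as [D HD].
    assert (Hcmp : Rabs (b1 s - b1 t) <=
       (fun r => m * RInt (fun u => Rabs (V u)) t r + m * Rabs lam * r) s - (fun r => m * RInt (fun u => Rabs (V u)) t r + m * Rabs lam * r) t).
    { apply (cmp_fin b1 (fun r => m * RInt (fun u => Rabs (V u)) t r + m * Rabs lam * r) D t s). lra.
      - intros x Hx. split. apply Hb1c.
        apply (cont_of_deriv _ (fun x => m * Rabs (V x) + m * Rabs lam)).
        apply (deriv_g V z dl t m lam x HV); lra.
      - intros x Hx Hn. exists ((V x - lam) * b x), (m * Rabs (V x) + m * Rabs lam).
        split. apply HD; auto; lra. split.
        apply (deriv_g V z dl t m lam x HV); lra.
        replace (m * Rabs (V x) + m * Rabs lam) with ((Rabs (V x) + Rabs lam) * m) by ring.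
        apply deriv_bound. lra. apply Hm. lra. }
    cbv beta in Hcmp. rewrite RInt_point in Hcmp. change (@zero R_CompleteNormedModule) with 0 in Hcmp.
    assert (HI : RInt (fun u => Rabs (V u)) t s <= L).
    { assert (Hch : plus (RInt (fun u => Rabs (V u)) t s) (RInt (fun u => Rabs (V u)) s (z + dl)) = RInt (fun u => Rabs (V u)) t (z + dl)).
      { apply RInt_Chasles; apply (exRInt_Va V z dl HV); lra. }
      change (@plus R_CompleteNormedModule) with Rplus in Hch.
      assert (0 <= RInt (fun u => Rabs (V u)) s (z + dl)).
      { apply RInt_ge_0. lra. apply (exRInt_Va V z dl HV); lra. intros; apply Rabs_pos. }
      assert (RInt (fun u => Rabs (V u)) t (z + dl) < l1 + 1) by (apply HF; lra).
      pose proof (Rmax_l (l1 + 1) 0). unfold L. lra. }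
    assert (m * RInt (fun u => Rabs (V u)) t s <= m * L) by (apply Rmult_le_compat_l; lra).
    assert (m * Rabs lam * (s - t) <= m * Rabs lam).
    { assert (0 <= m * Rabs lam) by (apply Rmult_le_pos; [lra|apply Rabs_pos]).
      rewrite <- (Rmult_1_r (m * Rabs lam)) at 2. apply Rmult_le_compat_l; lra. }
    assert (Rabs (b1 s) <= Rabs (b1 s - b1 t) + Rabs (b1 t)).
    { replace (b1 s) with ((b1 s - b1 t) + b1 t) at 1 by ring. apply Rabs_triang. }
    assert (E1 : m * Rabs lam * s - (m * 0 + m * Rabs lam * t) = m * Rabs lam * (s - t)) by ring.
    assert (E2 : C * m = m * L + m * Rabs lam) by (unfold C; ring).
    rewrite E2. lra. }
  destruct (Rle_dec (Rabs (b1 s)) (C * m)) as [Hle|Hgt]; auto.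
  specialize (Key ((Rabs (b1 s) - C * m)/2)). lra.
Qed.

Lemma cont_fst (f : R -> C) x : continuous f x -> continuous (fun t => fst (f t)) x.
Proof.
  intro H. apply (continuous_comp f fst). exact H.
  destruct (f x). apply continuous_fst.
Qed.

Lemma cont_V (V : R -> R) x : continuous (fun x => RtoC (V x)) x -> continuous V x.
Proof. intro H. apply (cont_fst _ _ H). Qed.

Lemma local_uniq (V b b1 : R -> R) lam z :
  PC0 (fun x => RtoC (V x)) ->
  (forall x, is_derive b x (b1 x)) -> (forall x, continuous b1 x) ->
  (forall a c, exists D, forall x, a <= x <= c -> ~ In x D -> is_derive b1 x ((V x - lam) * b x)) ->
  b z = 0 -> b1 z = 0 ->
  exists eps, 0 < eps /\ forall s, z <= s <= z + eps -> b s = 0 /\ b1 s = 0.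
Proof.
  intros [_ HPC] Hb Hb1c Hb1 Hz Hz1.
  assert (Hbp : exists eps C, 0 < eps /\ 0 <= C /\ eps * C <= 1/2 /\ bound_prop b b1 z eps C).
  { destruct (classic (continuous (fun x => RtoC (V x)) z)) as [Hc|Hc].
    - apply (caseA V b b1 lam z); auto. apply cont_V, Hc.
    - destruct (HPC z Hc) as [dl [Hdl [Hr [_ [[l1 Hl1] _]]]]].
      assert (Ef : (fun s => Cmod (RtoC (V s))) = (fun s => Rabs (V s))).
      { apply functional_extensionality. intro s. apply Cmod_R. }
      rewrite Ef in Hl1.
      apply (caseB V b b1 lam z dl l1); auto.
      intros t Ht. apply cont_V, Hr. lra. }
  destruct Hbp as [eps [C [He [HC [HeC Hbp]]]]].
  exists eps. split; auto. apply (local_core b b1 z eps C); auto.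
Qed.

Lemma zero_limit (f : R -> R) z m :
  continuous f m -> z < m -> (forall r, z <= r < m -> f r = 0) -> f m = 0.
Proof.
  intros Hc Hzm H. destruct (Req_dec (f m) 0) as [E|E]; auto. exfalso.
  apply continuity_pt_filterlim in Hc.
  assert (Hp : 0 < Rabs (f m)) by (apply Rabs_pos_lt, E).
  destruct (proj1 (continuity_pt_locally f m) Hc (mkposreal _ Hp)) as [d Hd].
  simpl in Hd. assert (Hd0 := cond_pos d).
  set (r := Rmax z (m - d/2)).
  assert (Hr1 : z <= r) by apply Rmax_l.
  assert (Hr2 : m - d/2 <= r) by apply Rmax_r.
  assert (Hr3 : r < m) by (unfold r; apply Rmax_case; lra).
  assert (Hb : ball m d r) by (apply ball_R; rewrite Rabs_left; lra).
  specialize (Hd r Hb). rewrite (H r) in Hd by lra.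
  rewrite Rminus_0_l, Rabs_Ropp in Hd. lra.
Qed.

Lemma uniq_right (V b b1 : R -> R) lam z :
  PC0 (fun x => RtoC (V x)) ->
  (forall x, is_derive b x (b1 x)) -> (forall x, continuous b1 x) ->
  (forall a c, exists D, forall x, a <= x <= c -> ~ In x D -> is_derive b1 x ((V x - lam) * b x)) ->
  b z = 0 -> b1 z = 0 ->
  forall T, z <= T -> b T = 0.
Proof.
  intros HPC Hb Hb1c Hb1 Hz Hz1 T HT.
  destruct (classic (b T = 0)) as [HbT|HbT]; auto. exfalso.
  set (E := fun t => z <= t <= T /\ forall r, z <= r <= t -> b r = 0 /\ b1 r = 0).
  assert (HEz : E z).
  { split. lra. intros r Hr. replace r with z by lra. auto. }
  destruct (completeness E) as [m [Hub Hlub]].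
  { exists T. intros t [Ht _]. lra. }
  { exists z. exact HEz. }
  assert (Hzm : z <= m) by (apply Hub, HEz).
  assert (HmT : m <= T) by (apply Hlub; intros t [Ht _]; lra).
  assert (Hbelow : forall r, z <= r < m -> b r = 0 /\ b1 r = 0).
  { intros r Hr. destruct (classic (exists t, E t /\ r < t)) as [[t [[Ht1 Ht2] Hrt]]|Hn].
    - apply Ht2. lra.
    - exfalso. assert (m <= r).
      { apply Hlub. intros t Et. destruct (Rle_dec t r) as [Htr|Htr]; auto. exfalso. apply Hn. exists t. split; auto. lra. }
      lra. }
  assert (Hm : b m = 0 /\ b1 m = 0).
  { destruct (Req_dec z m) as [Ez|Ez].
    - subst m. auto.
    - split.
      + apply (zero_limit b z m). apply (cont_of_deriv b b1), Hb. lra. intros r Hr; apply Hbelow; auto.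
      + apply (zero_limit b1 z m). apply Hb1c. lra. intros r Hr; apply Hbelow; auto. }
  destruct Hm as [Hm1 Hm2].
  destruct (local_uniq V b b1 lam m HPC Hb Hb1c Hb1 Hm1 Hm2) as [eps [He Hloc]].
  destruct (Rle_dec (m + eps) T) as [Hle|Hle].
  - assert (E (m + eps)).
    { split. lra. intros r Hr. destruct (Rlt_dec r m) as [Hrm|Hrm]. apply Hbelow; lra. apply Hloc; lra. }
    assert (m + eps <= m) by (apply Hub; auto). lra.
  - apply HbT. apply Hloc. lra.
Qed.

Lemma lin_deriv (f g : R -> R) x df dg al be :
  is_derive f x df -> is_derive g x dg ->
  is_derive (fun t => al * f t + be * g t) x (al * df + be * dg).
Proof.
  intros H1 H2.
  pose proof (is_derive_scal _ x al _ H1) as H3.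
  pose proof (is_derive_scal _ x be _ H2) as H4.
  pose proof (is_derive_plus _ _ x _ _ H3 H4) as H5.
  exact H5.
Qed.

Lemma lin_cont (f g : R -> R) x al be :
  continuous f x -> continuous g x -> continuous (fun t => al * f t + be * g t) x.
Proof.
  intros H1 H2.
  apply (continuous_plus (fun t => al * f t) (fun t => be * g t)).
  apply (continuous_scal_r al f x H1). apply (continuous_scal_r be g x H2).
Qed.

Lemma iter_bloch (h : R -> R) gam mu :
  (forall x, h (x + gam) = mu * h x) -> forall n x, h (x + INR n * gam) = mu ^ n * h x.
Proof.
  intros H n. induction n as [|n IH]; intro x.
  - simpl. rewrite Rmult_0_l, Rplus_0_r. ring.
  - rewrite S_INR. replace (x + (INR n + 1) * gam) with ((x + INR n * gam) + gam) by ring.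
    rewrite H, IH. simpl. ring.
Qed.

Lemma archi_shift gam x x0 : 0 < gam -> exists n : nat, x0 <= x + INR n * gam.
Proof.
  intro Hg. destruct (Rle_dec ((x0 - x) / gam) 0) as [Hr|Hr].
  - exists 0%nat. simpl. assert (x0 - x <= 0).
    { apply (Rmult_le_reg_r (/ gam)). apply Rinv_0_lt_compat; auto. rewrite Rmult_0_l. exact Hr. }
    lra.
  - destruct (nfloor_ex ((x0 - x) / gam)) as [n [Hn1 Hn2]]. lra.
    exists (S n). rewrite S_INR.
    assert (x0 - x = (x0 - x) / gam * gam) by (field; lra).
    assert ((x0 - x) / gam * gam <= (INR n + 1) * gam) by (apply Rmult_le_compat_r; lra).
    lra.
Qed.

Lemma small_pow_zero (rho a Mb : R) :
  Rabs rho < 1 -> 0 <= Mb ->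
  (forall n : nat, exists g, a = rho ^ n * g /\ Rabs g <= Mb) -> a = 0.
Proof.
  intros Hr HM H. destruct (Req_dec a 0) as [E|E]; auto. exfalso.
  assert (Ha : 0 < Rabs a) by (apply Rabs_pos_lt, E).
  destruct (pow_lt_1_zero rho Hr (Rabs a / (Mb + 1))) as [N HN].
  { apply Rdiv_lt_0_compat; lra. }
  specialize (HN N (le_n N)).
  destruct (H N) as [g [Hg1 Hg2]].
  assert (Rabs a = Rabs (rho ^ N) * Rabs g) by (rewrite Hg1, Rabs_mult; auto).
  assert (Rabs (rho ^ N) * Rabs g <= Rabs a / (Mb + 1) * Mb).
  { apply Rmult_le_compat; try apply Rabs_pos; lra. }
  assert (Rabs a / (Mb + 1) * Mb < Rabs a).
  { unfold Rdiv. rewrite Rmult_assoc. rewrite <- (Rmult_1_r (Rabs a)) at 2.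
    apply Rmult_lt_compat_l; auto.
    apply (Rmult_lt_reg_l (Mb + 1)). lra. rewrite <- Rmult_assoc, Rinv_r by lra. lra. }
  lra.
Qed.

Lemma sumsq_nz a b : a <> 0 \/ b <> 0 -> a * a + b * b <> 0.
Proof. intros [H|H] E; apply H; nra. Qed.

Lemma main_real (gam : R) (V : R -> R) lam (u v u1 v1 : R -> R) (m1 m2 x0 M : R) :
  0 < gam -> PC0 (fun x => RtoC (V x)) ->
  (forall x, is_derive u x (u1 x)) -> (forall x, is_derive v x (v1 x)) ->
  (forall x, continuous u1 x) -> (forall x, continuous v1 x) ->
  (forall a c, exists D, forall x, a <= x <= c -> ~ In x D ->
      is_derive u1 x ((V x - lam) * u x) /\ is_derive v1 x ((V x - lam) * v x)) ->
  (forall x, u (x + gam) = m1 * u x - m2 * v x) ->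
  (forall x, v (x + gam) = m1 * v x + m2 * u x) ->
  m1 * m1 + m2 * m2 <> 0 ->
  (exists x, ~ (u x = 0 /\ v x = 0)) ->
  (forall x, Rabs (u x) <= M /\ Rabs (v x) <= M) ->
  u x0 = 0 -> v x0 = 0 ->
  m2 = 0 /\ (m1 = 1 \/ m1 = -1) /\
  exists c1 c2 f, (forall x, u x = c1 * f x /\ v x = c2 * f x) /\
     (forall x, f (x + gam) = m1 * f x).
Proof.
  intros Hg HPC Hu Hv Hu1c Hv1c HD Hbu Hbv HN Hnz Hbd Hux0 Hvx0.
  assert (combo : forall al be z, al * u z + be * v z = 0 -> al * u1 z + be * v1 z = 0 ->
            forall T, z <= T -> al * u T + be * v T = 0).
  { intros al be z H1 H2 T HT.
    apply (uniq_right V (fun t => al * u t + be * v t) (fun t => al * u1 t + be * v1 t) lam z HPC);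
      auto.
    - intro x. apply lin_deriv; auto.
    - intro x. apply lin_cont; auto.
    - intros a c. destruct (HD a c) as [D HDD]. exists D. intros x Hx Hn.
      destruct (HDD x Hx Hn) as [Ha Hb].
      replace ((V x - lam) * (al * u x + be * v x)) with (al * ((V x - lam) * u x) + be * ((V x - lam) * v x)) by ring.
      apply lin_deriv; auto. }
  assert (back1 : forall x, u (x + gam) = 0 -> v (x + gam) = 0 -> u x = 0 /\ v x = 0).
  { intros x H1 H2. rewrite Hbu in H1. rewrite Hbv in H2.
    assert (E1 : (m1 * m1 + m2 * m2) * u x = m1 * (m1 * u x - m2 * v x) + m2 * (m1 * v x + m2 * u x)) by ring.
    assert (E2 : (m1 * m1 + m2 * m2) * v x = m1 * (m1 * v x + m2 * u x) - m2 * (m1 * u x - m2 * v x)) by ring.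
    rewrite H1, H2 in E1, E2. rewrite Rmult_0_r, Rmult_0_r, Rplus_0_r in E1.
    rewrite Rmult_0_r, Rmult_0_r, Rminus_0_r in E2.
    split; destruct (Rmult_integral _ _ (eq_sym (eq_sym E1))) as [A|A];
      try (exfalso; exact (HN A)); auto;
      destruct (Rmult_integral _ _ E2) as [B|B]; try (exfalso; exact (HN B)); auto. }
  assert (backn : forall n x, u (x + INR n * gam) = 0 -> v (x + INR n * gam) = 0 -> u x = 0 /\ v x = 0).
  { induction n as [|n IH]; intros x H1 H2.
    - simpl in H1, H2. rewrite Rmult_0_l, Rplus_0_r in H1, H2. auto.
    - rewrite S_INR in H1, H2.
      replace (x + (INR n + 1) * gam) with ((x + gam) + INR n * gam) in H1, H2 by ring.
      destruct (IH _ H1 H2). apply back1; auto. }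
  destruct Hnz as [xn Hxn].
  destruct (archi_shift gam xn x0 Hg) as [nn Hnn].
  set (y := xn + INR nn * gam).
  assert (Hy : ~ (u y = 0 /\ v y = 0)).
  { intros [A B]. apply Hxn. apply (backn nn xn A B). }
  assert (Hyx : x0 <= y) by exact Hnn.
  destruct (classic (u1 x0 = 0 /\ v1 x0 = 0)) as [[Hu10 Hv10]|Hnc].
  { exfalso. apply Hy. split.
    - replace (u y) with (1 * u y + 0 * v y) by ring. apply (combo 1 0 x0); lra.
    - replace (v y) with (0 * u y + 1 * v y) by ring. apply (combo 0 1 x0); lra. }
  set (c1 := u1 x0) in *; set (c2 := v1 x0) in *.
  assert (Hc : c1 * c1 + c2 * c2 <> 0).
  { apply sumsq_nz. destruct (Req_dec c1 0) as [E|E]; [right|left; exact E]. intro E2; apply Hnc; auto. }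
  assert (Hb : forall T, x0 <= T -> (- c2) * u T + c1 * v T = 0).
  { intros T HT. apply (combo (-c2) c1 x0). rewrite Hux0, Hvx0; ring. unfold c1, c2; ring. exact HT. }
  set (Nc := c1 * c1 + c2 * c2) in *.
  assert (HNc : 0 < Nc).
  { assert (0 <= Nc).
    { unfold Nc. assert (0 <= c1 * c1) by apply Rle_0_sqr. assert (0 <= c2 * c2) by apply Rle_0_sqr. lra. }
    destruct H as [H|H]; auto. exfalso; apply Hc; auto. }
  set (f := fun t => (c1 * u t + c2 * v t) / Nc).
  assert (rep : forall t, (- c2) * u t + c1 * v t = 0 -> u t = c1 * f t /\ v t = c2 * f t).
  { intros t Ht. unfold f. split.
    - assert (c1 * ((c1 * u t + c2 * v t) / Nc) - u t = c2 * ((- c2) * u t + c1 * v t) / Nc)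
        by (unfold Nc in *; field; exact Hc).
      rewrite Ht, Rmult_0_r in H. unfold Rdiv in H. rewrite Rmult_0_l in H. lra.
    - assert (c2 * ((c1 * u t + c2 * v t) / Nc) - v t = (- c1) * ((- c2) * u t + c1 * v t) / Nc)
        by (unfold Nc in *; field; exact Hc).
      rewrite Ht, Rmult_0_r in H. unfold Rdiv in H. rewrite Rmult_0_l in H. lra. }
  assert (Hfy : f y <> 0).
  { intro E. apply Hy. destruct (rep y (Hb y Hyx)) as [A B]. rewrite A, B, E. split; ring. }
  assert (Hm2 : m2 = 0).
  { assert (H1 := Hb (y + gam) ltac:(lra)). rewrite Hbu, Hbv in H1.
    assert (E : (- c2) * (m1 * u y - m2 * v y) + c1 * (m1 * v y + m2 * u y)
                = m1 * ((- c2) * u y + c1 * v y) + m2 * (Nc * f y)) by (unfold f, Nc in *; field; lra).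
    rewrite E, (Hb y Hyx), Rmult_0_r, Rplus_0_l in H1.
    destruct (Rmult_integral _ _ H1) as [A|A]; auto.
    destruct (Rmult_integral _ _ A) as [B|B]; lra. }
  subst m2.
  assert (Hm1 : m1 <> 0) by (intro E; apply HN; rewrite E; ring).
  assert (Hball : forall x, (- c2) * u x + c1 * v x = 0).
  { intro x. set (h := fun t => (- c2) * u t + c1 * v t).
    assert (Hh : forall t, h (t + gam) = m1 * h t) by (intro t; unfold h; rewrite Hbu, Hbv; ring).
    destruct (archi_shift gam x x0 Hg) as [n Hn].
    assert (E := iter_bloch h gam m1 Hh n x).
    change (h x = 0). unfold h in E at 1. rewrite (Hb _ Hn) in E.
    destruct (Rmult_integral _ _ (eq_sym E)) as [A|A]; auto.
    exfalso. exact (pow_nonzero m1 n Hm1 A). }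
  assert (Hf : forall x, f (x + gam) = m1 * f x).
  { intro x. unfold f. rewrite Hbu, Hbv. field. lra. }
  assert (HM : 0 <= M) by (destruct (Hbd x0) as [A _]; eapply Rle_trans; [apply Rabs_pos|exact A]).
  set (Mf := (Rabs c1 * M + Rabs c2 * M) / Nc).
  assert (HMf0 : 0 <= Mf).
  { unfold Mf. apply Rmult_le_pos. apply Rplus_le_le_0_compat; apply Rmult_le_pos; auto; apply Rabs_pos.
    left; apply Rinv_0_lt_compat; auto. }
  assert (Hfb : forall x, Rabs (f x) <= Mf).
  { intro x. unfold f, Mf, Rdiv. rewrite Rabs_mult, (Rabs_right (/ Nc)) by (left; apply Rinv_0_lt_compat; auto).
    apply Rmult_le_compat_r. left; apply Rinv_0_lt_compat; auto.
    destruct (Hbd x) as [A B].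
    eapply Rle_trans. apply Rabs_triang. rewrite !Rabs_mult.
    apply Rplus_le_compat; apply Rmult_le_compat_l; auto; apply Rabs_pos. }
  assert (Habs : Rabs m1 = 1).
  { destruct (Rtotal_order (Rabs m1) 1) as [Hl|[Hl|Hl]]; auto; exfalso; apply Hfy.
    - apply (small_pow_zero m1 (f y) Mf Hl HMf0). intro n.
      exists (f (y - INR n * gam)). split; auto.
      rewrite <- (iter_bloch f gam m1 Hf n). f_equal. ring.
    - assert (Hr : Rabs (/ m1) < 1).
      { rewrite Rabs_inv. apply (Rmult_lt_reg_l (Rabs m1)). lra.
        rewrite Rinv_r by lra. lra. }
      apply (small_pow_zero (/ m1) (f y) Mf Hr HMf0). intro n.
      exists (f (y + INR n * gam)). split; auto.
      rewrite (iter_bloch f gam m1 Hf n). rewrite pow_inv.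
      field. apply pow_nonzero; auto. }
  split; auto. split.
  { unfold Rabs in Habs. destruct (Rcase_abs m1); [right|left]; lra. }
  exists c1, c2, f. split; auto.
Qed.

Lemma prod_deriv (A B : R -> R) x dA dB :
  is_derive A x dA -> is_derive B x dB -> is_derive (fun t => A t * B t) x (dA * B x + A x * dB).
Proof.
  intros H1 H2. exact (is_derive_mult A B x dA dB H1 H2 (fun n m => Rmult_comm n m)).
Qed.

Lemma cont_prod2 (A B C D : R -> R) x :
  continuous A x -> continuous B x -> continuous C x -> continuous D x ->
  continuous (fun t => A t * B t + C t * D t) x.
Proof.
  intros. apply (continuous_plus (fun t => A t * B t) (fun t => C t * D t)).
  apply (continuous_mult A B); auto. apply (continuous_mult C D); auto.
Qed.

Lemma cont_R (A : R -> R) x : ex_derive A x -> continuous A x.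
Proof. intro H. apply (ex_derive_continuous (K:=R_AbsRing) (V:=R_NormedModule)). exact H. Qed.

Lemma snd_RtoC (r : R) : snd (RtoC r) = 0. Proof. reflexivity. Qed.

Lemma cmult_comp (a b : C) : Cmult a b = (fst a * fst b - snd a * snd b, fst a * snd b + snd a * fst b).
Proof. reflexivity. Qed.
Lemma deriv_fst (f : R -> C) x l : is_derive f x l -> is_derive (fun t => fst (f t)) x (fst l).
Proof.
  intro H. unfold is_derive in *.
  apply (filterdiff_comp f (fun t : C => fst t) _ (fun t : C => fst t) H).
  apply filterdiff_linear, is_linear_fst.
Qed.
Lemma deriv_snd (f : R -> C) x l : is_derive f x l -> is_derive (fun t => snd (f t)) x (snd l).
Proof.
  intro H. unfold is_derive in *.
  apply (filterdiff_comp f (fun t : C => snd t) _ (fun t : C => snd t) H).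
  apply filterdiff_linear, is_linear_snd.
Qed.
Lemma cont_snd (f : R -> C) x : continuous f x -> continuous (fun t => snd (f t)) x.
Proof.
  intro H. apply (continuous_comp f snd). exact H.
  destruct (f x). apply continuous_snd.
Qed.

Theorem theoremA12 (gamma : R) (V : R -> R) (lambda : R) (k : C) (p : R -> C)
    (psi : R -> C) :
  0 < gamma ->
  PC0 (fun x => RtoC (V x)) -> periodic gamma V ->
  PCper 2 gamma p ->
  (forall x, psi x = (cexp (Ci * k * RtoC x) * p x)%C) ->
  (exists x, psi x <> RtoC 0) ->
  is_solution V lambda psi ->
  (exists M : R, forall x, Cmod (psi x) <= M) ->
  (exists x0, psi x0 = RtoC 0) ->
  (exists n : Z, k = RtoC (IZR n * PI / gamma)) /\
  exists (c : C) (f : R -> R),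
    (forall x, psi x = (c * RtoC (f x))%C) /\
    ((forall x, f (x + gamma) = f x) \/ (forall x, f (x + gamma) = - f x)).
Proof.
  intros Hg HVpc HVper Hp Hpsi Hnz Hsol [M Hbd] [x0 Hx0].
  destruct Hsol as [psi1 [Hd1 Hd2]].
  destruct Hp as [[Hpc [g [[Hgc _] Hpg]]] Hpper].
  destruct k as [k1 k2].
  set (P1 := fun t => fst (p t)). set (P2 := fun t => snd (p t)).
  set (G1 := fun t => fst (g t)). set (G2 := fun t => snd (g t)).
  assert (HP1 : forall x, is_derive P1 x (G1 x)).
  { apply deriv_everywhere. intro; apply cont_fst, Hpc. intro; apply cont_fst, Hgc.
    intros a b. destruct (Hpg a b) as [D HD]. exists D. intros. apply deriv_fst, HD; auto. }
  assert (HP2 : forall x, is_derive P2 x (G2 x)).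
  { apply deriv_everywhere. intro; apply cont_snd, Hpc. intro; apply cont_snd, Hgc.
    intros a b. destruct (Hpg a b) as [D HD]. exists D. intros. apply deriv_snd, HD; auto. }
  set (E1 := fun t => exp (- k2 * t) * cos (k1 * t)).
  set (E2 := fun t => exp (- k2 * t) * sin (k1 * t)).
  set (dE1 := fun t => - k2 * exp (- k2 * t) * cos (k1 * t) - k1 * exp (- k2 * t) * sin (k1 * t)).
  set (dE2 := fun t => - k2 * exp (- k2 * t) * sin (k1 * t) + k1 * exp (- k2 * t) * cos (k1 * t)).
  assert (HE1 : forall x, is_derive E1 x (dE1 x)).
  { intro x. unfold E1, dE1. auto_derive; auto. ring. }
  assert (HE2 : forall x, is_derive E2 x (dE2 x)).
  { intro x. unfold E2, dE2. auto_derive; auto. ring. }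
  assert (HdE1c : forall x, continuous dE1 x).
  { intro x. apply cont_R. unfold dE1. auto_derive; auto. }
  assert (HdE2c : forall x, continuous dE2 x).
  { intro x. apply cont_R. unfold dE2. auto_derive; auto. }
  assert (HE1c : forall x, continuous E1 x) by (intro x; apply cont_R; eexists; apply HE1).
  assert (HE2c : forall x, continuous E2 x) by (intro x; apply cont_R; eexists; apply HE2).
  set (u := fun t => fst (psi t)). set (v := fun t => snd (psi t)).
  set (u1 := fun t => fst (psi1 t)). set (v1 := fun t => snd (psi1 t)).
  assert (Hcomp : forall x, psi x = (E1 x * P1 x - E2 x * P2 x, E1 x * P2 x + E2 x * P1 x)).
  { intro x. rewrite Hpsi.
    assert (Hz : (Ci * (k1, k2) * RtoC x)%C = (- k2 * x, k1 * x)).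
    { unfold Ci, RtoC. rewrite !cmult_comp. simpl. f_equal; ring. }
    rewrite Hz. unfold cexp. rewrite cmult_comp. reflexivity. }
  assert (Hu : forall x, u x = E1 x * P1 x - E2 x * P2 x) by (intro x; unfold u; rewrite Hcomp; reflexivity).
  assert (Hv : forall x, v x = E1 x * P2 x + E2 x * P1 x) by (intro x; unfold v; rewrite Hcomp; reflexivity).
  assert (Hud : forall x, is_derive u x (u1 x)) by (intro x; apply deriv_fst, Hd1).
  assert (Hvd : forall x, is_derive v x (v1 x)) by (intro x; apply deriv_snd, Hd1).
  set (Fu := fun x => 1 * (dE1 x * P1 x + E1 x * G1 x) + (-1) * (dE2 x * P2 x + E2 x * G2 x)).
  set (Fv := fun x => 1 * (dE1 x * P2 x + E1 x * G2 x) + 1 * (dE2 x * P1 x + E2 x * G1 x)).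
  assert (HFu : forall x, is_derive u x (Fu x)).
  { intro x. assert (A : forall t, 1 * (E1 t * P1 t) + (-1) * (E2 t * P2 t) = u t) by (intro t; rewrite Hu; ring).
    apply (is_derive_ext _ _ _ _ A). apply lin_deriv; apply prod_deriv; auto. }
  assert (HFv : forall x, is_derive v x (Fv x)).
  { intro x. assert (A : forall t, 1 * (E1 t * P2 t) + 1 * (E2 t * P1 t) = v t) by (intro t; rewrite Hv; ring).
    apply (is_derive_ext _ _ _ _ A). apply lin_deriv; apply prod_deriv; auto. }
  assert (HP1c : forall x, continuous P1 x) by (intro x; apply cont_R; eexists; apply HP1).
  assert (HP2c : forall x, continuous P2 x) by (intro x; apply cont_R; eexists; apply HP2).
  assert (HG1c : forall x, continuous G1 x) by (intro x; apply cont_fst, Hgc).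
  assert (HG2c : forall x, continuous G2 x) by (intro x; apply cont_snd, Hgc).
  assert (Hu1c : forall x, continuous u1 x).
  { intro x. assert (A : forall t, Fu t = u1 t).
    { intro t. rewrite <- (is_derive_unique _ _ _ (HFu t)). apply is_derive_unique, Hud. }
    apply (continuous_ext _ _ _ A). apply lin_cont; apply cont_prod2; auto. }
  assert (Hv1c : forall x, continuous v1 x).
  { intro x. assert (A : forall t, Fv t = v1 t).
    { intro t. rewrite <- (is_derive_unique _ _ _ (HFv t)). apply is_derive_unique, Hvd. }
    apply (continuous_ext _ _ _ A). apply lin_cont; apply cont_prod2; auto. }
  assert (HODE : forall a c, exists D, forall x, a <= x <= c -> ~ In x D ->
      is_derive u1 x ((V x - lambda) * u x) /\ is_derive v1 x ((V x - lambda) * v x)).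
  { intros a c. destruct (Hd2 a c) as [D HD]. exists D. intros x Hx Hn.
    destruct (HD x Hx Hn) as [psi2 [Hp2 Heq]].
    assert (Q1 := f_equal fst Heq). assert (Q2 := f_equal snd Heq).
    rewrite !cmult_comp in Q1, Q2. simpl in Q1, Q2.
    split.
    - replace ((V x - lambda) * u x) with (fst psi2).
      apply (deriv_fst psi1 x psi2 Hp2). unfold u. lra.
    - replace ((V x - lambda) * v x) with (snd psi2).
      apply (deriv_snd psi1 x psi2 Hp2). unfold v. lra. }
  set (m1 := exp (- k2 * gamma) * cos (k1 * gamma)).
  set (m2 := exp (- k2 * gamma) * sin (k1 * gamma)).
  assert (HE1s : forall x, E1 (x + gamma) = m1 * E1 x - m2 * E2 x).
  { intro x. unfold E1, E2, m1, m2.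
    replace (- k2 * (x + gamma)) with (- k2 * x + - k2 * gamma) by ring.
    replace (k1 * (x + gamma)) with (k1 * x + k1 * gamma) by ring.
    rewrite exp_plus, cos_plus. ring. }
  assert (HE2s : forall x, E2 (x + gamma) = m1 * E2 x + m2 * E1 x).
  { intro x. unfold E1, E2, m1, m2.
    replace (- k2 * (x + gamma)) with (- k2 * x + - k2 * gamma) by ring.
    replace (k1 * (x + gamma)) with (k1 * x + k1 * gamma) by ring.
    rewrite exp_plus, sin_plus. ring. }
  assert (HP1s : forall x, P1 (x + gamma) = P1 x) by (intro x; unfold P1; rewrite Hpper; auto).
  assert (HP2s : forall x, P2 (x + gamma) = P2 x) by (intro x; unfold P2; rewrite Hpper; auto).
  assert (Hbu : forall x, u (x + gamma) = m1 * u x - m2 * v x).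
  { intro x. rewrite !Hu, Hv, HE1s, HE2s, HP1s, HP2s. ring. }
  assert (Hbv : forall x, v (x + gamma) = m1 * v x + m2 * u x).
  { intro x. rewrite !Hv, Hu, HE1s, HE2s, HP1s, HP2s. ring. }
  assert (Hexp : 0 < exp (- k2 * gamma)) by apply exp_pos.
  assert (HN : m1 * m1 + m2 * m2 = exp (- k2 * gamma) * exp (- k2 * gamma)).
  { unfold m1, m2. pose proof (sin2_cos2 (k1 * gamma)) as S. unfold Rsqr in S.
    replace (exp (- k2 * gamma) * cos (k1 * gamma) * (exp (- k2 * gamma) * cos (k1 * gamma)) +
      exp (- k2 * gamma) * sin (k1 * gamma) * (exp (- k2 * gamma) * sin (k1 * gamma))) with
      (exp (- k2 * gamma) * exp (- k2 * gamma) * (sin (k1 * gamma) * sin (k1 * gamma) + cos (k1 * gamma) * cos (k1 * gamma))) by ring.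
    rewrite S. ring. }
  assert (HN0 : m1 * m1 + m2 * m2 <> 0).
  { rewrite HN. apply Rgt_not_eq. apply Rmult_lt_0_compat; auto. }
  assert (Hnz' : exists x, ~ (u x = 0 /\ v x = 0)).
  { destruct Hnz as [x Hx]. exists x. intros [A B]. apply Hx.
    unfold u, v in A, B. rewrite (surjective_pairing (psi x)), A, B. reflexivity. }
  assert (Hbd' : forall x, Rabs (u x) <= M /\ Rabs (v x) <= M).
  { intro x. pose proof (Rmax_Cmod (psi x)). pose proof (Hbd x).
    pose proof (Rmax_l (Rabs (fst (psi x))) (Rabs (snd (psi x)))).
    pose proof (Rmax_r (Rabs (fst (psi x))) (Rabs (snd (psi x)))).
    unfold u, v. split; lra. }
  assert (Hux0 : u x0 = 0) by (unfold u; rewrite Hx0; reflexivity).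
  assert (Hvx0 : v x0 = 0) by (unfold v; rewrite Hx0; reflexivity).
  destruct (main_real gamma V lambda u v u1 v1 m1 m2 x0 M Hg HVpc Hud Hvd Hu1c Hv1c HODE Hbu Hbv HN0 Hnz' Hbd' Hux0 Hvx0)
    as [Hm2 [Hm1 [c1 [c2 [f [Hrep Hf]]]]]].
  assert (Hsin : sin (k1 * gamma) = 0).
  { unfold m2 in Hm2. destruct (Rmult_integral _ _ Hm2) as [A|A]; auto. lra. }
  destruct (sin_eq_0_0 _ Hsin) as [n Hn].
  assert (Hee : exp (- k2 * gamma) * exp (- k2 * gamma) = 1).
  { rewrite <- HN, Hm2. destruct Hm1 as [A|A]; rewrite A; ring. }
  assert (He1 : exp (- k2 * gamma) = 1).
  { assert (A : (exp (- k2 * gamma) - 1) * (exp (- k2 * gamma) + 1) = 0).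
    { replace ((exp (- k2 * gamma) - 1) * (exp (- k2 * gamma) + 1)) with
        (exp (- k2 * gamma) * exp (- k2 * gamma) - 1) by ring. lra. }
    destruct (Rmult_integral _ _ A); lra. }
  assert (Hk2 : k2 = 0).
  { rewrite <- exp_0 in He1. apply exp_inv in He1.
    destruct (Rmult_integral _ _ He1) as [A|A]; lra. }
  split.
  { exists n. unfold RtoC. rewrite Hk2. f_equal. rewrite <- Hn. field. lra. }
  exists (c1, c2), f. split.
  { intro x. destruct (Hrep x) as [A B]. unfold u, v in A, B.
    rewrite (surjective_pairing (psi x)), A, B, cmult_comp. simpl. f_equal; ring. }
  destruct Hm1 as [A|A]; [left|right]; intro x; rewrite Hf, A; ring.
Qed.
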